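(* Let $A,B\subseteq\mathbb{N}$ with $A\cap B=\emptyset$, $A\in\mathcal{D}$ and $\underline{\underline{d}}(B)=0$. Then $\underline{\underline{d}}(A\cup B)=d(A)$.
   Context: $\mathbb{N}=\{1,2,3,\dots\}$. For $A\subseteq\mathbb{N}$ let $A(n)=|A\cap[1,n]|$. Let $\mathcal{D}$ be the collection of all $A\subseteq\mathbb{N}$ for which the asymptotic density $d(A)=\lim_{n\to\infty}\frac{A(n)}{n}$ exists. Define $\underline{\underline{d}}(A)=\sup\{d(B);\ B\subseteq A,\ B\in\mathcal{D}\}$. *)

(* Defs.v *)
(* Subsets of N = {1,2,3,...} are represented
   by boolean predicates A : nat -> bool; the value at 0 is ignored
   (all counting is over [1,n]). *)
From Stdlib Require Import Reals.
From Coquelicot Require Import Coquelicot.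
Open Scope R_scope.

Fixpoint cnt (A : nat -> bool) (n : nat) : nat :=
  match n with
  | O => O
  | S m => (if A (S m) then 1 else 0) + cnt A m
  end%nat.

Definition has_density (A : nat -> bool) (a : R) : Prop :=
  is_lim_seq (fun n => INR (cnt A n) / INR n) a.

Definition in_D (A : nat -> bool) : Prop := exists a, has_density A a.

Definition subsetN (B A : nat -> bool) : Prop :=
  forall k, (1 <= k)%nat -> B k = true -> A k = true.

Definition ldd (A : nat -> bool) : Rbar :=
  Lub_Rbar (fun x => exists B, subsetN B A /\ has_density B x).

(* Main.v *)
Require Import Defs.
From Stdlib Require Import Reals Lra Lia Arith.
From Coquelicot Require Import Coquelicot.
Open Scope R_scope.

Fixpoint ecnt (D : nat -> bool) (d : R) (n : nat) : nat :=
  match n with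
  | O => O
  | S m => ((if D (S m) then (if Rle_dec (INR (ecnt D d m) + 1) (d * INR (S m)) then 1 else 0) else 0) + ecnt D d m)%nat
  end.

Definition Eset (D : nat -> bool) (d : R) (k : nat) : bool :=
  match k with
  | O => false
  | S m => D (S m) && (if Rle_dec (INR (ecnt D d m) + 1) (d * INR (S m)) then true else false)
  end.

Lemma ecnt_S D d m : ecnt D d (S m) =
  ((if D (S m) then (if Rle_dec (INR (ecnt D d m) + 1) (d * INR (S m)) then 1 else 0) else 0) + ecnt D d m)%nat.
Proof. reflexivity. Qed.

Lemma cnt_E D d n : cnt (Eset D d) n = ecnt D d n.
Proof.
  induction n as [|n IH]; simpl; auto.
  rewrite IH. destruct (D (S n)); destruct (Rle_dec _ _); simpl; lia.
Qed.

Lemma E_upper D d n : 0 <= d -> INR (ecnt D d n) <= d * INR n.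
Proof.
  intros Hd. induction n as [|n IH].
  - simpl; lra.
  - rewrite ecnt_S.
    destruct (D (S n)); [destruct (Rle_dec _ _)|].
    + rewrite plus_INR; simpl (INR 1). lra.
    + simpl Nat.add. rewrite S_INR. lra.
    + simpl Nat.add. rewrite S_INR. lra.
Qed.

Lemma E_lower D d n : exists m, (m <= n)%nat /\
  d * INR m - 2 + INR (cnt D n) - INR (cnt D m) <= INR (ecnt D d n).
Proof.
  induction n as [|n IH].
  - exists O. simpl. split; [lia|lra].
  - destruct IH as [m [Hm IH]].
    destruct (Rle_dec (INR (ecnt D d (S n)) + 1) (d * INR (S n))) as [HB|HA].
    + exists m. split; [lia|].
      simpl cnt. rewrite ecnt_S in *. destruct (D (S n)) eqn:HD.
      * destruct (Rle_dec (INR (ecnt D d n) + 1) (d * INR (S n))) as [Ha|Hr].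
        -- rewrite !plus_INR in *; simpl (INR 1) in *. lra.
        -- simpl Nat.add in HB. lra.
      * simpl Nat.add in *. lra.
    + exists (S n). split; [lia|]. lra.
Qed.

Lemma cnt_le X n : (cnt X n <= n)%nat.
Proof. induction n; simpl; [lia|]. destruct (X (S n)); lia. Qed.

Lemma interval_ineq (A B C : nat -> bool) :
  (forall k, (1 <= k)%nat -> C k = true -> A k = true \/ B k = true) ->
  forall m k,
  INR (cnt C (m+k)) - INR (cnt C m) <=
  INR (cnt A (m+k)) - INR (cnt A m) +
  (INR (cnt (fun j => andb (C j) (B j)) (m+k)) - INR (cnt (fun j => andb (C j) (B j)) m)).
Proof.
  intros H m k. induction k as [|k IH].
  - rewrite Nat.add_0_r. lra.
  - rewrite Nat.add_succ_r. simpl cnt. rewrite !plus_INR.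
    specialize (H (S (m+k)) ltac:(lia)).
    destruct (C (S (m+k))), (A (S (m+k))), (B (S (m+k))); cbn [andb];
    try (destruct (H eq_refl) as [h|h]; discriminate);
    simpl (INR 1); simpl (INR 0); lra.
Qed.

Lemma dens_bound X x : has_density X x -> forall eps, 0 < eps -> exists K, 0 <= K /\
  forall n m, (m <= n)%nat -> Rabs (INR (cnt X m) - x * INR m) <= eps * INR n + K.
Proof.
  intros HX eps Heps.
  apply is_lim_seq_spec in HX. destruct (HX (mkposreal eps Heps)) as [N HN].
  exists (INR N * (1 + Rabs x)). split.
  { apply Rmult_le_pos; [apply pos_INR| pose proof (Rabs_pos x); lra]. }
  intros n m Hmn.
  assert (Hn : 0 <= INR n) by apply pos_INR.
  assert (HK : 0 <= INR N * (1 + Rabs x)).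
  { apply Rmult_le_pos; [apply pos_INR| pose proof (Rabs_pos x); lra]. }
  destruct m as [|m'].
  { simpl. rewrite Rmult_0_r, Rminus_0_r, Rabs_R0. nra. }
  destruct (le_lt_dec N (S m')) as [HNm|HNm].
  - specialize (HN (S m') HNm). cbn [pos] in HN.
    set (m := S m') in *.
    assert (Hm : 0 < INR m) by (apply lt_0_INR; unfold m; lia).
    assert (E : INR (cnt X m) - x * INR m = INR m * (INR (cnt X m) / INR m - x)) by (field; lra).
    rewrite E, Rabs_mult, (Rabs_right (INR m)) by lra.
    assert (INR m <= INR n) by (apply le_INR; auto).
    assert (0 <= Rabs (INR (cnt X m) / INR m - x)) by apply Rabs_pos.
    nra.
  - set (m := S m') in *.
    assert (Hc : INR (cnt X m) <= INR m) by (apply le_INR, cnt_le).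
    assert (Hc0 : 0 <= INR (cnt X m)) by apply pos_INR.
    assert (HmN : INR m <= INR N) by (apply le_INR; lia).
    assert (Hm0 : 0 <= INR m) by apply pos_INR.
    eapply Rle_trans; [apply Rabs_triang|]. rewrite Rabs_Ropp, Rabs_mult, (Rabs_right (INR m)) by lra.
    rewrite Rabs_right by lra.
    pose proof (Rabs_pos x). nra.
Qed.

Lemma no_bigger (A B C : nat -> bool) (a c : R) :
  (forall k, (1 <= k)%nat -> ~ (A k = true /\ B k = true)) ->
  has_density A a -> ldd B = Finite 0 ->
  subsetN C (fun k => orb (A k) (B k)) -> has_density C c -> c <= a.
Proof.
  intros Hdis HA HB HC Hc.
  apply Rnot_lt_le. intros Hlt.
  set (d := (c - a) / 2).
  assert (Hd : 0 < d) by (unfold d; lra).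
  set (D := fun j => andb (C j) (B j)).
  set (E := Eset D d).
  assert (HCab : forall k, (1 <= k)%nat -> C k = true -> A k = true \/ B k = true).
  { intros k Hk Ck. specialize (HC k Hk Ck). apply Bool.orb_true_iff in HC. exact HC. }
  assert (HE : has_density E d).
  { unfold has_density. apply is_lim_seq_spec. intros eps.
    destruct (dens_bound A a HA (eps/8)) as [KA [KA0 HKA]]. { destruct eps; simpl; lra. }
    destruct (dens_bound C c Hc (eps/8)) as [KC [KC0 HKC]]. { destruct eps; simpl; lra. }
    destruct (INR_unbounded (2 * (2 + 2*KA + 2*KC) / eps)) as [N HN].
    exists (S N). intros n Hn.
    assert (Hpos : 0 < eps) by (destruct eps; simpl; lra).
    assert (HnN : INR N < INR n) by (apply lt_INR; lia).
    assert (Hn0 : 0 < INR n) by (apply lt_0_INR; lia).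
    unfold E. rewrite cnt_E.
    pose proof (E_upper D d n ltac:(lra)) as Hup.
    destruct (E_lower D d n) as [m [Hmn Hlow]].
    pose proof (interval_ineq A B C HCab m (n - m)) as Hint.
    replace (m + (n - m))%nat with n in Hint by lia.
    fold D in Hint.
    pose proof (HKA n n (le_n n)) as A1. pose proof (HKA n m Hmn) as A2.
    pose proof (HKC n n (le_n n)) as C1. pose proof (HKC n m Hmn) as C2.
    apply Rabs_le_between in A1, A2, C1, C2.
    assert (Hmn' : INR m <= INR n) by (apply le_INR; auto).
    assert (Hbig : 2 * (2 + 2*KA + 2*KC) < eps * INR n).
    { set (X := 2 * (2 + 2*KA + 2*KC)) in *.
      assert (Hx : X / eps * eps = X) by (field; lra).
      assert (0 < (INR n - X / eps) * eps) by (apply Rmult_lt_0_compat; lra).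
      nra. }
    set (q := INR (ecnt D d n) - d * INR n).
    assert (Hq1 : q <= 0) by (unfold q; lra).
    assert (Hq2 : - (eps * INR n) < q).
    { unfold q. unfold d in *. nra. }
    replace (INR (ecnt D d n) / INR n - d) with (q * / INR n) by (unfold q; field; lra).
    apply Rabs_def1.
    - assert (0 < / INR n) by (apply Rinv_0_lt_compat; lra). destruct eps; simpl in *. nra.
    - assert (0 < / INR n) by (apply Rinv_0_lt_compat; lra).
      apply Rmult_lt_compat_r with (r := / INR n) in Hq2; auto.
      replace (- (eps * INR n) * / INR n) with (- eps) in Hq2 by (field; lra). exact Hq2. }
  assert (Hsub : subsetN E B).
  { intros k Hk Ek. destruct k as [|k]; [lia|]. unfold E, Eset in Ek.
    apply andb_prop in Ek. destruct Ek as [Dk _]. unfold D in Dk.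
    apply andb_prop in Dk. tauto. }
  pose proof (Lub_Rbar_correct (fun x => exists B0, subsetN B0 B /\ has_density B0 x)) as [Hub _].
  specialize (Hub d (ex_intro _ E (conj Hsub HE))).
  unfold ldd in HB. rewrite HB in Hub. simpl in Hub. lra.
Qed.

Theorem lemma3p8 (A B : nat -> bool) (a : R) :
  (forall k, (1 <= k)%nat -> ~ (A k = true /\ B k = true)) ->
  has_density A a ->
  ldd B = Finite 0 ->
  ldd (fun k => orb (A k) (B k)) = Finite a.
Proof.
  intros Hdis HA HB. unfold ldd at 1. apply is_lub_Rbar_unique. split.
  - intros x [C [HC Hc]]. simpl. exact (no_bigger A B C a x Hdis HA HB HC Hc).
  - intros b Hb. apply Hb. exists A. split; auto.
    intros k _ Ak. rewrite Ak. reflexivity.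
Qed.
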